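(* Let $\lambda$ be a nonempty partition with Frobenius coordinates $(\vec s|\vec t)$ of rank $d$. Then, as rational functions of $R$, $$\tilde s^{(R)}_\lambda=\left|\tilde s^{(R)}_{(s_i|t_j)}\right|_{d\times d}=\left|\frac{\Gamma(R-t_j)/\Gamma(R+s_i+1)}{s_i!\,t_j!\,(1+s_i+t_j)}\right|_{d\times d}.$$
   Context: For an integer $m\ge0$, $\tilde h^{(R)}_m:=\frac{(R-1)!}{(R+m-1)!\,m!}=\frac{1}{m!\,R(R+1)\cdots(R+m-1)}$, and $\tilde h^{(R)}_m:=0$ for $m<0$. For a partition $\mu$ with $l(\mu)$ parts, $\tilde s^{(R)}_\mu:=\left|\tilde h^{(R-j+1)}_{\mu_i-i+j}\right|_{l(\mu)\times l(\mu)}$ (determinant). Frobenius coordinates of a partition of rank $d$ (number of $i$ with $\lambda_i\ge i$): $s_i=\lambda_i-i$, $t_i=\lambda^t_i-i$; $(s|t)$ denotes the hook partition $(s+1,1^t)$. $\Gamma(R-t)/\Gamma(R+s+1)=1/\big((R-t)(R-t+1)\cdots(R+s)\big)$. *)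

(* Defs.v *)
From HB Require Import structures.
From mathcomp Require Import all_boot all_order all_algebra fraction.
Set Implicit Arguments. Unset Strict Implicit. Unset Printing Implicit Defensive.
Import Order.TTheory GRing.Theory Num.Theory.
Local Open Scope ring_scope.

(* A partition: a nonincreasing sequence of positive naturals (lambda_1 = nth 0 l 0). *)
Definition is_partition (l : seq nat) : bool :=
  sorted geq l && all (fun x => 0 < x)%N l.

(* conjugate part lambda^t_i (1-indexed i) = #{k | lambda_k >= i} *)
Definition conj_part (l : seq nat) (i : nat) : nat := count (fun x => i <= x)%N l.

(* rank d = #{i >= 1 | lambda_i >= i} *)
Definition part_rank (l : seq nat) : nat :=
  count (fun i => i <= nth 0%N l i.-1)%N (iota 1 (size l)).

(* Frobenius coordinates, 0-indexed: frob_s l i = s_{i+1} = lambda_{i+1} - (i+1),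
   frob_t l i = t_{i+1} = lambda^t_{i+1} - (i+1). *)
Definition frob_s (l : seq nat) (i : nat) : nat := (nth 0%N l i - i.+1)%N.
Definition frob_t (l : seq nat) (i : nat) : nat := (conj_part l i.+1 - i.+1)%N.

(* hook partition (s|t) = (s+1, 1^t) *)
Definition hook (s t : nat) : seq nat := s.+1 :: nseq t 1%N.

Definition htilde (F : fieldType) (R : F) (m : int) : F :=
  match m with
  | Posz n => (n`!%:R * \prod_(k < n) (R + k%:R))^-1
  | Negz _ => 0
  end.

(* \tilde s^{(R)}_mu = det [ \tilde h^{(R-j+1)}_{mu_i - i + j} ]  (1-indexed i,j);
   with 0-indexed i0, j0 this is \tilde h^{(R - j0)}_{mu_{i0} - i0 + j0}. *)
Definition stilde (F : fieldType) (R : F) (mu : seq nat) : F :=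
  \det (\matrix_(i < size mu, j < size mu)
          htilde (R - (j : nat)%:R) ((nth 0%N mu i)%:Z - (i : nat)%:Z + (j : nat)%:Z)).

(* Gamma(R-t)/Gamma(R+s+1) = 1/((R-t)(R-t+1)...(R+s)) *)
Definition gamma_ratio (F : fieldType) (R : F) (s t : nat) : F :=
  (\prod_(k < s + t + 1) (R - t%:R + k%:R))^-1.

Definition ratfun := {fraction {poly rat}}.
Definition RX : ratfun := @tofrac _ 'X.

(* Main.v *)
Require Import Defs.
From HB Require Import structures.
From mathcomp Require Import all_boot all_order all_algebra fraction.
From mathcomp Require Import perm zify ring.
Import Order.TTheory GRing.Theory Num.Theory.
Local Open Scope ring_scope.

Lemma conjK (mu : seq nat) (i b : nat) : sorted geq mu -> (0 < b)%N ->
  (b <= nth 0%N mu i)%N = (i < conj_part mu b)%N.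
Proof.
rewrite /conj_part.
elim: mu i => [|x mu IH] i Hs Hb; first by rewrite nth_nil /=; case: b Hb.
have Hall : all (geq x) mu.
  by apply: (order_path_min (leT:=geq)) => //; move=> a c e /= H1 H2; apply: leq_trans H2 H1.
have Hs' : sorted geq mu by apply: (path_sorted (x:=x)).
have Hcnt : ~~ (b <= x)%N -> count (fun y => b <= y)%N mu = 0%N.
  move=> Hbx; apply/eqP; rewrite -leqn0 leqNgt -has_count; apply/hasPn => y Hy.
  move/allP: Hall => /(_ y Hy) /= Hyx; apply/negP => Hby; move/negP: Hbx; apply.
  exact: leq_trans Hby Hyx.
case: i => [|i] /=.
  by case: (leqP b x) => Hbx //=; rewrite Hcnt ?ltnn // -ltnNge.
case: (leqP b x) => Hbx /=; first by rewrite add1n ltnS IH.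
rewrite add0n Hcnt ?ltnn -?ltnNge //; apply/negbTE; rewrite -ltnNge.
case: (ltnP i (size mu)) => Hi; last by rewrite nth_default.
move/allP: Hall => /(_ _ (mem_nth 0%N Hi)) /= H; exact: leq_ltn_trans H Hbx.
Qed.

Lemma count_antitone (P : pred nat) : (forall i, P i.+1 -> P i) ->
  forall n i, (i < n)%N -> P i = (i < count P (iota 0 n))%N.
Proof.
move=> HP; elim=> [|n IH] i Hi //.
rewrite -[n.+1]addn1 iotaD count_cat /= addn0 add0n.
have Hc : (count P (iota 0 n) <= n)%N by rewrite -{2}(size_iota 0 n) count_size.
case Pn: (P n).
  have Hall : forall k, (k <= n)%N -> P k.
    move=> k Hk; rewrite -(subKn Hk); elim: (n - k)%N (leq_subr k n) => [|m IHm] Hm.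
      by rewrite subn0.
    apply: HP; rewrite subnSK //; apply: IHm; exact: ltnW.
  have -> : count P (iota 0 n) = n.
    rewrite (eq_in_count (a2 := predT)) ?count_predT ?size_iota // => k.
    by rewrite mem_iota add0n => /andP [_ Hk]; apply: Hall; apply: ltnW.
  by rewrite Hall // addn1 Hi.
rewrite addn0; case: (ltnP i n) => Hin; first exact: IH.
have -> : i = n by lia.
by rewrite Pn ltnNge Hc.
Qed.

Lemma sorted_geq_nth (mu : seq nat) (i j : nat) : sorted geq mu -> (i <= j)%N ->
  (nth 0%N mu j <= nth 0%N mu i)%N.
Proof.
move=> Hs Hij; case: (ltnP j (size mu)) => Hj; last by rewrite nth_default.
have Hgt : transitive geq by move=> a b c /= H1 H2; apply: leq_trans H2 H1.
apply: (sorted_leq_nth Hgt (fun a => leqnn a) 0%N Hs) => //.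
by rewrite inE (leq_ltn_trans Hij Hj).
Qed.

Lemma rank_ltn (mu : seq nat) : sorted geq mu ->
  forall i, (i < size mu)%N -> (i < part_rank mu)%N = (i.+1 <= nth 0%N mu i)%N.
Proof.
move=> Hs i Hi.
have -> : part_rank mu = count (fun k => k.+1 <= nth 0%N mu k)%N (iota 0 (size mu)).
  by rewrite /part_rank -[1%N]/(1 + 0)%N iotaDl count_map.
symmetry; apply: (@count_antitone (fun k => k.+1 <= nth 0%N mu k)%N) => //.
move=> k Hk; case: (ltnP k.+1 (size mu)) => Hk1; last by rewrite nth_default in Hk.
apply: leq_trans (ltnW Hk) _.
exact: sorted_geq_nth.
Qed.

Lemma rank_le (mu : seq nat) : (part_rank mu <= size mu)%N.
Proof. by rewrite /part_rank -{2}(size_iota 1 (size mu)) count_size. Qed.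

Definition ell (mu : seq nat) (i : nat) : nat := (nth 0%N mu i + (size mu - i.+1))%N.
Definition uu (mu : seq nat) (j : nat) : nat := (size mu - (frob_t mu j).+1)%N.

Set Implicit Arguments. Unset Strict Implicit.
Section PartFacts.
Variable mu : seq nat.
Hypothesis Hs : sorted geq mu.
Local Notation n := (size mu).
Local Notation d := (part_rank mu).

Lemma rk_lt i : (i < d)%N -> (i.+1 <= nth 0%N mu i)%N.
Proof.
move=> Hi; have Hn : (i < n)%N := leq_trans Hi (rank_le mu).
by rewrite -rank_ltn.
Qed.

Lemma rk_ge i : (d <= i)%N -> (i < n)%N -> (nth 0%N mu i <= i)%N.
Proof.
move=> Hd Hn; have := @rank_ltn mu Hs i Hn; rewrite ltnNge Hd /=.
by move/esym/negbT; rewrite -ltnNge ltnS.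
Qed.

Lemma ell_s i : (i < d)%N -> ell mu i = (frob_s mu i + n)%N.
Proof.
move=> Hi; have := rk_lt Hi; have := leq_trans Hi (rank_le mu).
rewrite /ell /frob_s; lia.
Qed.

Lemma ell_decr i j : (i < j)%N -> (j < n)%N -> (ell mu j < ell mu i)%N.
Proof.
move=> Hij Hj; have := @sorted_geq_nth mu i j Hs (ltnW Hij); rewrite /ell; lia.
Qed.

Lemma conj_le b : (conj_part mu b <= n)%N.
Proof. exact: count_size. Qed.

Lemma conj_ge j : (j < d)%N -> (j.+1 <= conj_part mu j.+1)%N.
Proof. by move=> Hj; rewrite -(conjK mu j j.+1 Hs) //; apply: rk_lt. Qed.

Lemma t_bound j : (j < d)%N -> ((frob_t mu j).+1 <= n)%N.
Proof. move=> Hj; have := conj_ge Hj; have := conj_le j.+1; rewrite /frob_t; lia. Qed.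

Lemma t_decr i j : (i < j)%N -> (j < d)%N -> (frob_t mu j < frob_t mu i)%N.
Proof.
move=> Hij Hj; have := conj_ge Hj.
have : (conj_part mu j.+1 <= conj_part mu i.+1)%N.
  by apply: sub_count => x /= Hx; exact: leq_trans (leqW Hij) Hx.
rewrite /frob_t; lia.
Qed.

Lemma ell_uu_neq i j : (d <= i)%N -> (i < n)%N -> (j < d)%N -> ell mu i != uu mu j.
Proof.
move=> Hdi Hin Hjd; have Ht := t_bound Hjd; have Hc := conj_ge Hjd.
have Hk := conjK mu i j.+1 Hs (ltn0Sn j).
rewrite /ell /uu /frob_t; move: Ht Hc Hk; rewrite /frob_t.
case: (leqP j.+1 (nth 0%N mu i)) => H1 Ht Hc Hk.
  have H2 : (i < conj_part mu j.+1)%N by rewrite -Hk.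
  apply/negP => /eqP; lia.
have H2 : (conj_part mu j.+1 <= i)%N by rewrite leqNgt -Hk.
apply/negP => /eqP; lia.
Qed.

Lemma split_perm :
  perm_eq ([seq ell mu i | i <- iota d (n - d)] ++ [seq uu mu j | j <- iota 0 d]) (iota 0 n).
Proof.
have Hdn := rank_le mu.
have Hsub : {subset [seq ell mu i | i <- iota d (n - d)] ++ [seq uu mu j | j <- iota 0 d] <= iota 0 n}.
  move=> x; rewrite mem_cat => /orP [] /mapP [k]; rewrite mem_iota => /andP [H1 H2] ->;
    rewrite mem_iota add0n /=.
    have := rk_ge H1; rewrite subnKC // in H2; move/(_ H2); rewrite /ell; lia.
  rewrite /uu; lia.
have Huniq : uniq ([seq ell mu i | i <- iota d (n - d)] ++ [seq uu mu j | j <- iota 0 d]).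
  rewrite cat_uniq; apply/and3P; split.
  - rewrite map_inj_in_uniq ?iota_uniq // => a b; rewrite !mem_iota subnKC // => /andP [_ Ha] /andP [_ Hb] E.
    case: (ltngtP a b) => // H.
      by have := ell_decr H Hb; rewrite E ltnn.
    by have := ell_decr H Ha; rewrite E ltnn.
  - apply/hasPn => x /mapP [j]; rewrite mem_iota add0n => /andP [_ Hj] ->.
    apply/mapP => [[i]]; rewrite mem_iota subnKC // => /andP [H1 H2] E.
    by move: (ell_uu_neq H1 H2 Hj); rewrite E eqxx.
  - rewrite map_inj_in_uniq ?iota_uniq // => a b; rewrite !mem_iota add0n => /andP [_ Ha] /andP [_ Hb].
    have Hta := t_bound Ha; have Htb := t_bound Hb.
    rewrite /uu => E; case: (ltngtP a b) => // H.
      by have := t_decr H Hb; lia.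
    by have := t_decr H Ha; lia.
have Hsize : (size (iota 0 n) <= size ([seq ell mu i | i <- iota d (n - d)] ++ [seq uu mu j | j <- iota 0 d]))%N.
  by rewrite size_cat !size_map !size_iota subnK.
have [_ Heq] := uniq_min_size Huniq Hsub Hsize.
by apply: uniq_perm => //; exact: iota_uniq.
Qed.
End PartFacts.

Section Alg.
Variable F : fieldType.

Definition Delta (f : nat -> F) (a b : nat) : F :=
  \prod_(a <= i < b) \prod_(i.+1 <= j < b) (f i - f j).

Lemma fact_if (a N : nat) : (a <= N)%N ->
  (a`!)%:R = \prod_(0 <= m < N) (if (m < a)%N then a%:R - m%:R else 1) :> F.
Proof.
move=> H; rewrite (@big_cat_nat _ _ _ a) //=.
rewrite [X in _ * X]big_nat_cond [X in _ * X]big1 ?mulr1; last first.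
  by move=> m /andP [/andP [H1 _] _]; rewrite ltnNge H1.
rewrite -ffactnn ffact_prod natr_prod big_mkord; apply: eq_bigr => i _.
by rewrite ltn_ord natrB // ltnW.
Qed.

Lemma fact_if2 (u N : nat) : (u < N)%N ->
  ((N - u.+1)`!)%:R = \prod_(0 <= m < N) (if (u < m)%N then m%:R - u%:R else 1) :> F.
Proof.
move=> H; rewrite (@big_cat_nat _ _ _ u.+1) //=.
rewrite [X in X * _]big_nat_cond [X in X * _]big1 ?mul1r; last first.
  by move=> m /andP [/andP [_ H1] _]; rewrite ltnNge -ltnS H1.
have -> : \prod_(u.+1 <= m < N) (if (u < m)%N then m%:R - u%:R else 1) =
   \prod_(0 <= k < N - u.+1) (k.+1)%:R :> F.
  rewrite -(add0n u.+1) big_addn; apply: eq_big_nat => k Hk.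
  rewrite add0n addnS ltnS leq_addl -natrB; last by lia.
  by have -> : ((k + u).+1 - u = k.+1)%N by lia.
rewrite (fact_prod (N - u.+1)%N).
by rewrite big_add1 /= natr_prod.
Qed.

End Alg.

Section EId.
Variable F : fieldType.
Variable mu : seq nat.
Hypothesis Hs : sorted geq mu.
Local Notation n := (size mu).
Local Notation d := (part_rank mu).
Local Notation ellR := (fun i => (ell mu i)%:R : F).
Local Notation sR := (fun i => (frob_s mu i)%:R : F).
Local Notation tR := (fun i => (frob_t mu i)%:R : F).

Lemma prod_split (g : nat -> F) :
  \prod_(0 <= m < n) g m = (\prod_(d <= k < n) g (ell mu k)) * \prod_(0 <= j < d) g (uu mu j).
Proof.
rewrite {1}/index_iota subn0 -(perm_big _ (split_perm Hs)) big_cat /= !big_map.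
by rewrite /index_iota subn0.
Qed.

Lemma uu_lt j : (j < d)%N -> (uu mu j < n)%N.
Proof. move=> Hj; have := t_bound Hs Hj; rewrite /uu; lia. Qed.

Lemma uuR j : (j < d)%N -> (uu mu j)%:R = n%:R - (frob_t mu j)%:R - 1 :> F.
Proof.
move=> Hj; have := t_bound Hs Hj => H; rewrite /uu natrB // -addn1 natrD; ring.
Qed.

Lemma fact_shift (s N : nat) :
  ((s + N)`!)%:R = (s`!)%:R * \prod_(0 <= m < N) ((s + N)%:R - m%:R) :> F.
Proof.
have := ffact_fact (leq_addl s N); rewrite addnK => <-.
rewrite natrM mulrC ffact_prod natr_prod big_mkord; congr (_ * _).
by apply: eq_bigr => i _; rewrite natrB // ltnW // (leq_trans (ltn_ord i)) // leq_addl.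
Qed.

Lemma E_id :
  Delta ellR 0 n * (\prod_(0 <= i < d) ((frob_s mu i)`!)%:R)
    * (\prod_(0 <= j < d) ((frob_t mu j)`!)%:R)
    * (\prod_(0 <= i < d) \prod_(0 <= j < d) (frob_s mu i + frob_t mu j + 1)%:R)
  = Delta sR 0 d * Delta tR 0 d * \prod_(0 <= i < n) ((ell mu i)`!)%:R.
Proof.
have Hdn := rank_le mu.
set Y := \prod_(0 <= i < d) \prod_(d <= k < n) (ellR i - ellR k).
set Z := \prod_(0 <= i < d) \prod_(0 <= j < d) (frob_s mu i + frob_t mu j + 1)%:R.
set X := \prod_(d <= i < n) \prod_(0 <= j < d)
           (if (uu mu j < ell mu i)%N then ellR i - (uu mu j)%:R else 1).
have e1 : Delta ellR 0 n = Delta sR 0 d * Y * Delta ellR d n.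
  rewrite /Delta (big_cat_nat (leq0n d) Hdn) /=; congr (_ * _).
  rewrite /Y -big_split /=; apply: eq_big_nat => i /andP [_ Hi].
  rewrite (big_cat_nat Hi Hdn) /=; congr (_ * _).
  apply: eq_big_nat => j /andP [_ Hj].
  by rewrite !ell_s // !natrD; ring.
have e2 : \prod_(0 <= i < n) ((ell mu i)`!)%:R =
    (\prod_(0 <= i < d) ((frob_s mu i + n)`!)%:R) * \prod_(d <= i < n) ((ell mu i)`!)%:R :> F.
  rewrite (big_cat_nat (leq0n d) Hdn) /=; congr (_ * _).
  by apply: eq_big_nat => i /andP [_ Hi]; rewrite ell_s.
have e3 : \prod_(0 <= i < d) ((frob_s mu i + n)`!)%:R =
    (\prod_(0 <= i < d) ((frob_s mu i)`!)%:R) * Y * Z :> F.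
  rewrite /Y /Z -!big_split /=; apply: eq_big_nat => i /andP [_ Hi].
  rewrite fact_shift prod_split -mulrA; congr (_ * (_ * _)).
    by apply: eq_big_nat => k _; rewrite (ell_s Hs Hi).
  apply: eq_big_nat => j /andP [_ Hj]; rewrite uuR // !natrD; ring.
have e5 : \prod_(d <= i < n) ((ell mu i)`!)%:R = Delta ellR d n * X :> F.
  rewrite /Delta /X -big_split /=; apply: eq_big_nat => i /andP [Hdi Hin].
  have Hli : (ell mu i <= n)%N.
    have := rk_ge Hs Hdi Hin; rewrite /ell; lia.
  rewrite (fact_if _ Hli) prod_split; congr (_ * _).
  rewrite (@big_cat_nat _ _ _ i.+1) //=; last by apply: leqW.
  rewrite big_nat_cond big1 ?mul1r; last first.
    move=> k /andP [/andP [Hdk Hki] _]; rewrite ltnS leq_eqVlt in Hki.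
    case/orP: Hki => [/eqP -> | Hki]; first by rewrite ltnn.
    by rewrite ltnNge ltnW // ell_decr.
  by apply: eq_big_nat => k /andP [Hik Hkn]; rewrite ell_decr.
have e6 : \prod_(0 <= j < d) ((frob_t mu j)`!)%:R = X * Delta tR 0 d :> F.
  rewrite /X exchange_big_nat /Delta -big_split /=; apply: eq_big_nat => j /andP [_ Hj].
  have Ht := t_bound Hs Hj.
  rewrite [in X in X = _](_ : frob_t mu j = (n - (uu mu j).+1)%N); last by rewrite /uu; lia.
  rewrite (fact_if2 _ (uu_lt Hj)) prod_split; congr (_ * _).
  rewrite (@big_cat_nat _ _ _ j.+1) //=.
  rewrite big_nat_cond big1 ?mul1r; last first.
    move=> k /andP [/andP [_ Hkj] _]; rewrite ltnS leq_eqVlt in Hkj.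
    case/orP: Hkj => [/eqP -> | Hkj]; first by rewrite ltnn.
    have := t_decr Hs Hkj Hj; have := t_bound Hs (ltn_trans Hkj Hj).
    move=> H1 H2; have Hle : (uu mu k <= uu mu j)%N by rewrite /uu; lia.
    by rewrite ltnNge Hle.
  apply: eq_big_nat => k /andP [Hjk Hkd].
  have := t_decr Hs Hjk Hkd; have := t_bound Hs Hkd => H1 H2.
  have -> : (uu mu j < uu mu k)%N by rewrite /uu; lia.
  by rewrite !uuR //; ring.
rewrite e1 e2 e3 e5 e6; ring.
Qed.
End EId.

Section Content.
Variable F : fieldType.
Variable R : F.
Hypothesis HR : forall a b : nat, R + a%:R - b%:R != 0.

Definition Gf (N m : nat) : F := \prod_(k < m) (R - N%:R + k%:R).

Lemma Gf_neq0 N m : Gf N m != 0.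
Proof.
rewrite /Gf prodf_seq_neq0; apply/allP => k _ /=.
by rewrite addrAC HR.
Qed.

Lemma Gf_add N a m : Gf N (a + m) = Gf N a * \prod_(k < m) (R - N%:R + (a + k)%:R).
Proof. by rewrite /Gf big_split_ord /=. Qed.

Lemma gr_neq0 s t : \prod_(k < s + t + 1) (R - t%:R + k%:R) != 0.
Proof.
rewrite prodf_seq_neq0; apply/allP => k _ /=.
by rewrite addrAC HR.
Qed.

Variable mu : seq nat.
Hypothesis Hs : sorted geq mu.
Local Notation n := (size mu).
Local Notation d := (part_rank mu).

Lemma C_id :
  \prod_(0 <= j < n) Gf n.-1 (n - j.+1) =
  (\prod_(0 <= j < d) gamma_ratio R (frob_s mu j) (frob_t mu j)) *
  \prod_(0 <= i < n) Gf n.-1 (ell mu i).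
Proof.
have Hdn := rank_le mu.
rewrite big_nat_rev /=.
rewrite (eq_big_nat _ _ (F2 := fun j => Gf n.-1 j)); last first.
  by move=> j /andP [_ Hj]; congr Gf; lia.
rewrite (prod_split Hs) (big_cat_nat (leq0n d) Hdn) /= mulrA mulrC; congr (_ * _).
rewrite -big_split /=; apply: eq_big_nat => i /andP [_ Hi].
have Ht := t_bound Hs Hi.
rewrite (ell_s Hs Hi).
have -> : (frob_s mu i + n = uu mu i + (frob_s mu i + frob_t mu i + 1))%N by rewrite /uu; lia.
rewrite Gf_add /gamma_ratio mulrA (mulrC _ (Gf _ _)) -mulrA.
set P := \prod_(k < _) (R - (frob_t mu i)%:R + k%:R).
have -> : \prod_(k < frob_s mu i + frob_t mu i + 1) (R - n.-1%:R + (uu mu i + k)%:R) = P.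
  apply: eq_bigr => k _; rewrite natrD (uuR _ Hs Hi).
  have -> : n.-1%:R = n%:R - 1 :> F.
    have Hn : (0 < n)%N by apply: leq_ltn_trans (leq0n i) (leq_trans Hi Hdn).
    by rewrite -{2}(prednK Hn) -natr1 addrK.
  ring.
by rewrite mulVf ?mulr1 // gr_neq0.
Qed.
End Content.

Section StepA.
Variable F : fieldType.
Variable R : F.
Hypothesis HR : forall a b : nat, R + a%:R - b%:R != 0.
Hypothesis HF : forall m : nat, (m.+1)%:R != 0 :> F.

Lemma fact_neq0 m : (m`!)%:R != 0 :> F.
Proof. by rewrite -(prednK (fact_gt0 m)) HF. Qed.

Definition invf (a b : nat) : F := if (b <= a)%N then ((a - b)`!%:R)^-1 else 0.

Lemma entry_eq (mu : seq nat) (i j : nat) : (i < size mu)%N -> (j < size mu)%N ->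
  htilde (R - j%:R) ((nth 0%N mu i)%:Z - i%:Z + j%:Z) =
  (Gf R (size mu).-1 (ell mu i))^-1 * invf (ell mu i) (size mu - j.+1)
    * Gf R (size mu).-1 (size mu - j.+1).
Proof.
move=> Hi Hj; rewrite /invf.
case: (leqP (size mu - j.+1) (ell mu i)) => H.
  have Hz : ((nth 0%N mu i)%:Z - i%:Z + j%:Z)%R = Posz (ell mu i - (size mu - j.+1)).
    by move: H; rewrite /ell; lia.
  rewrite Hz /=.
  set m := (ell mu i - (size mu - j.+1))%N.
  have -> : ell mu i = (size mu - j.+1 + m)%N by rewrite /m subnKC.
  rewrite Gf_add.
  have -> : \prod_(k < m) (R - (size mu).-1%:R + (size mu - j.+1 + k)%:R) =
            \prod_(k < m) (R - j%:R + k%:R).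
    have Hn1 : (size mu).-1%:R = (size mu)%:R - 1 :> F.
      by rewrite -{2}(prednK (leq_ltn_trans (leq0n j) Hj)) -natr1 addrK.
    apply: eq_bigr => k _; rewrite natrD natrB // Hn1 -natr1; ring.
  have H1 := Gf_neq0 HR (size mu).-1 (size mu - j.+1).
  have H2 : \prod_(k < m) (R - j%:R + k%:R) != 0.
    by rewrite prodf_seq_neq0; apply/allP => k _ /=; rewrite addrAC HR.
  have H3 := fact_neq0 m.
  rewrite !invfM; field.
  by rewrite H1 H2 H3.
have Hz : ((nth 0%N mu i)%:Z - i%:Z + j%:Z < 0)%R by move: H; rewrite /ell; lia.
by case: ((nth 0%N mu i)%:Z - i%:Z + j%:Z)%R Hz => //= m _; rewrite mulr0 mul0r.
Qed.
End StepA.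

Section Vander.
Variable F : fieldType.

Lemma det_rev n (A : 'M[F]_n) :
  \det (\matrix_(i < n, j < n) A (rev_ord i) (rev_ord j)) = \det A.
Proof.
pose s : {perm 'I_n} := perm (@rev_ord_inj n).
have -> : \matrix_(i < n, j < n) A (rev_ord i) (rev_ord j) = row_perm s (col_perm s A).
  by apply/matrixP => i j; rewrite !mxE !permE.
rewrite row_permE col_permE !det_mulmx !det_perm odd_permV mulrA mulrC mulrA.
by rewrite -signr_addb addbb expr0 mul1r.
Qed.

Lemma det_poly_vander n (b : 'I_n -> F) (p : nat -> {poly F}) :
  (forall j, p j \is monic) -> (forall j, size (p j) = j.+1) ->
  \det (\matrix_(i < n, j < n) (p j).[b i]) = \det (\matrix_(i < n, j < n) b i ^+ j).
Proof.
move=> Hm Hsz.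
have -> : \matrix_(i < n, j < n) (p j).[b i] =
          (\matrix_(i < n, k < n) b i ^+ k) *m (\matrix_(k < n, j < n) (p j)`_k).
  apply/matrixP => i j; rewrite !mxE (horner_coef_wide _ (n:=n)); last by rewrite Hsz.
  by apply: eq_bigr => k _; rewrite !mxE mulrC.
have HU : \det (\matrix_(k < n, j < n) (p j)`_k) = 1.
  rewrite -det_tr det_trig.
    apply: big1 => i _; rewrite !mxE.
    by move: (Hm i) => /monicP; rewrite /lead_coef Hsz.
  by apply/is_trig_mxP => i j Hij; rewrite !mxE nth_default // Hsz.
have := det_mulmx (\matrix_(i < n, k < n) b i ^+ k) (\matrix_(k < n, j < n) (p j)`_k).
by rewrite HU mulr1.
Qed.

Definition ffpoly (j : nat) : {poly F} := \prod_(k < j) ('X - (k%:R)%:P).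

Lemma ffpoly_monic j : ffpoly j \is monic.
Proof. by apply: monic_prod => k _; apply: monicXsubC. Qed.

Lemma ffpoly_size j : size (ffpoly j) = j.+1.
Proof.
rewrite /ffpoly size_prod; last by move=> k _; rewrite polyXsubC_eq0.
rewrite (eq_bigr (fun _ => 2%N)); last by move=> k _; rewrite size_XsubC.
rewrite sum_nat_const cardT size_enum_ord; lia.
Qed.

Lemma ffpoly_horner j x : (ffpoly j).[x] = \prod_(k < j) (x - k%:R).
Proof. by rewrite /ffpoly horner_prod; apply: eq_bigr => k _; rewrite hornerXsubC. Qed.

End Vander.

Section Vander2.
Variable F : fieldType.

Lemma Delta_cond (f : nat -> F) n :
  Delta f 0 n = \prod_(0 <= i < n) \prod_(0 <= j < n | (i < j)%N) (f i - f j).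
Proof.
rewrite /Delta; apply: eq_big_nat => i /andP [_ Hi].
rewrite [RHS](@big_cat_nat _ _ _ i.+1) //= [X in _ = X * _]big_nat_cond [X in _ = X * _]big1; last first.
  by move=> j /andP [/andP [_ Hj] Hij]; rewrite ltnS in Hj; move: Hij; rewrite ltnNge Hj.
rewrite mul1r [RHS]big_nat_cond [LHS]big_nat_cond; apply: eq_bigl => j.
by rewrite andbT; case/boolP: (i.+1 <= j < n)%N => //= /andP [].
Qed.

Lemma vander_reindex n (a : nat -> F) :
  \prod_(i < n) \prod_(j < n | (i < j)%N) (a (n - j.+1)%N - a (n - i.+1)%N) = Delta a 0 n.
Proof.
transitivity (\prod_(0 <= i < n) \prod_(0 <= j < n | (i < j)%N) (a (n - j.+1)%N - a (n - i.+1)%N)).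
  by symmetry; rewrite big_mkord; apply: eq_bigr => i _; rewrite big_mkord.
rewrite big_nat_rev /= Delta_cond.
transitivity (\prod_(0 <= i < n) \prod_(0 <= j < n | (j < i)%N) (a j - a i)).
  apply: eq_big_nat => i /andP [_ Hi]; rewrite big_nat_rev /= big_nat_cond [RHS]big_nat_cond.
  apply: eq_big => j.
    rewrite leq0n /=; case: (ltnP j n) => Hj /=; last by [].
    by apply/idP/idP => H; lia.
  move=> /andP [/andP [_ Hj] _]; congr (a _ - a _); lia.
rewrite (eq_bigr (fun i => \prod_(0 <= j < n) (if (j < i)%N then a j - a i else 1))); last first.
  by move=> i _; rewrite big_mkcond.
rewrite exchange_big_nat; apply: eq_bigr => j _; by rewrite [RHS]big_mkcond.
Qed.

Lemma det_ff n (a : nat -> F) :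
  \det (\matrix_(i < n, j < n) \prod_(k < (n - j.+1)%N) (a i - k%:R)) = Delta a 0 n.
Proof.
rewrite -det_rev.
have -> : \matrix_(i < n, j < n)
   (\matrix_(i < n, j < n) \prod_(k < (n - j.+1)%N) (a i - k%:R)) (rev_ord i) (rev_ord j)
   = \matrix_(i < n, j < n) (ffpoly F j).[a (n - i.+1)%N].
  apply/matrixP => i j; rewrite !mxE ffpoly_horner /=.
  by have -> : (n - (n - j.+1).+1 = j)%N by have := ltn_ord j; lia.
rewrite (det_poly_vander (fun i : 'I_n => a (n - i.+1)%N) (@ffpoly_monic F) (@ffpoly_size F)).
rewrite -det_tr.
have -> : (\matrix_(i < n, j < n) a (n - i.+1)%N ^+ j)^T = Vandermonde n (\row_(j < n) a (n - j.+1)%N).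
  by apply/matrixP => i j; rewrite !mxE.
rewrite det_Vandermonde -vander_reindex; apply: eq_bigr => i _; apply: eq_bigr => j _.
by rewrite !mxE.
Qed.
End Vander2.

Section Closed.
Variable F : fieldType.
Variable R : F.
Hypothesis HR : forall a b : nat, R + a%:R - b%:R != 0.
Hypothesis HF : forall m : nat, (m.+1)%:R != 0 :> F.

Lemma natr_neq0 m : (0 < m)%N -> m%:R != 0 :> F.
Proof. by move=> Hm; rewrite -(prednK Hm) HF. Qed.

Lemma invf_ff a b : invf F a b = (a`!%:R)^-1 * \prod_(k < b) (a%:R - k%:R).
Proof.
rewrite /invf; case: (leqP b a) => H; last first.
  by rewrite (bigD1 (Ordinal H)) //= subrr mul0r mulr0.
have Hp : \prod_(k < b) (a%:R - k%:R) = (a ^_ b)%:R :> F.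
  rewrite ffact_prod natr_prod; apply: eq_bigr => k _; rewrite natrB //.
  exact: ltnW (leq_trans (ltn_ord k) H).
have := ffact_fact H => Ef.
have H1 : (a ^_ b)%:R != 0 :> F by apply: natr_neq0; rewrite ffact_gt0.
have H2 := fact_neq0 HF (a - b).
rewrite Hp -Ef natrM; field; by rewrite H1 H2.
Qed.

Lemma detB (mu : seq nat) :
  \det (\matrix_(i < size mu, j < size mu) invf F (ell mu i) (size mu - j.+1)) =
  (\prod_(0 <= i < size mu) ((ell mu i)`!)%:R)^-1 * Delta (fun i => (ell mu i)%:R : F) 0 (size mu).
Proof.
rewrite -det_ff.
have -> : \matrix_(i < size mu, j < size mu) invf F (ell mu i) (size mu - j.+1) =
  diag_mx (\row_(i < size mu) ((ell mu i)`!%:R)^-1) *m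
  \matrix_(i < size mu, j < size mu) \prod_(k < (size mu - j.+1)%N) ((ell mu i)%:R - k%:R).
  by rewrite mul_diag_mx; apply/matrixP => i j; rewrite !mxE invf_ff.
rewrite det_mulmx det_diag (eq_bigr (fun i : 'I_(size mu) => ((ell mu i)`!%:R)^-1)); last first.
  by move=> i _; rewrite mxE.
by rewrite prodfV big_mkord.
Qed.

Lemma stilde_factor (mu : seq nat) :
  stilde R mu = (\prod_(0 <= j < size mu) Gf R (size mu).-1 (size mu - j.+1)) *
    (\prod_(0 <= i < size mu) Gf R (size mu).-1 (ell mu i))^-1 *
    \det (\matrix_(i < size mu, j < size mu) invf F (ell mu i) (size mu - j.+1)).
Proof.
rewrite /stilde.
have -> : \matrix_(i < size mu, j < size mu)
    htilde (R - (j : nat)%:R) ((nth 0%N mu i)%:Z - (i : nat)%:Z + (j : nat)%:Z) =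
  diag_mx (\row_(i < size mu) (Gf R (size mu).-1 (ell mu i))^-1) *m
  \matrix_(i < size mu, j < size mu) invf F (ell mu i) (size mu - j.+1) *m
  diag_mx (\row_(j < size mu) Gf R (size mu).-1 (size mu - j.+1)).
  rewrite mul_diag_mx mul_mx_diag; apply/matrixP => i j; rewrite !mxE.
  by rewrite (entry_eq HR HF).
rewrite !det_mulmx !det_diag.
rewrite (eq_bigr (fun i : 'I_(size mu) => (Gf R (size mu).-1 (ell mu i))^-1)); last first.
  by move=> i _; rewrite mxE.
rewrite [X in _ * X = _](eq_bigr (fun j : 'I_(size mu) => Gf R (size mu).-1 (size mu - j.+1))); last first.
  by move=> i _; rewrite mxE.
by rewrite prodfV !big_mkord mulrC mulrA.
Qed.

Definition Kform (mu : seq nat) : F :=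
  (\prod_(0 <= j < part_rank mu) gamma_ratio R (frob_s mu j) (frob_t mu j)) *
  (Delta (fun i => (frob_s mu i)%:R : F) 0 (part_rank mu) *
   Delta (fun i => (frob_t mu i)%:R : F) 0 (part_rank mu)) /
  ((\prod_(0 <= j < part_rank mu) ((frob_s mu j)`!%:R * (frob_t mu j)`!%:R)) *
   \prod_(0 <= i < part_rank mu) \prod_(0 <= j < part_rank mu)
      (frob_s mu i + frob_t mu j + 1)%:R).

Lemma stilde_closed (mu : seq nat) : sorted geq mu -> stilde R mu = Kform mu.
Proof.
move=> Hs.
have E := E_id F Hs.
rewrite stilde_factor detB (C_id HR Hs) /Kform big_split /=.
set G := \prod_(0 <= j < _) gamma_ratio _ _ _.
set Cd := \prod_(0 <= i < size mu) Gf R _ (ell mu i).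
set PL := \prod_(0 <= i < size mu) ((ell mu i)`!)%:R.
set PS := \prod_(0 <= i < _) ((frob_s mu i)`!)%:R.
set PT := \prod_(0 <= i < _) ((frob_t mu i)`!)%:R.
set Z := \prod_(0 <= i < _) \prod_(0 <= j < _) _.
set Dl := Delta _ 0 (size mu).
set DS := Delta _ 0 _.
set DT := Delta _ 0 _.
have HCd : Cd != 0.
  by rewrite /Cd prodf_seq_neq0; apply/allP => i _; apply: Gf_neq0.
have HPL : PL != 0.
  by rewrite /PL prodf_seq_neq0; apply/allP => i _; apply: fact_neq0.
have HPS : PS != 0.
  by rewrite /PS prodf_seq_neq0; apply/allP => i _; apply: fact_neq0.
have HPT : PT != 0.
  by rewrite /PT prodf_seq_neq0; apply/allP => i _; apply: fact_neq0.
have HZ : Z != 0.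
  rewrite /Z prodf_seq_neq0; apply/allP => i _ /=.
  by rewrite prodf_seq_neq0; apply/allP => j _ /=; rewrite addn1 HF.
have -> : Dl = DS * DT * PL / (PS * PT * Z).
  rewrite -E -/Dl -/PS -/PT -/Z; field; by rewrite HPS HPT HZ.
field; by rewrite HCd HPL HPS HPT HZ.
Qed.
End Closed.

Section Cauchy.
Variable F : fieldType.

Lemma schur n (M : 'M[F]_(1 + n)) : M (lshift n 0) (lshift n 0) != 0 ->
  \det M = M (lshift n 0) (lshift n 0) *
    \det (\matrix_(i < n, j < n) (M (rshift 1 i) (rshift 1 j) -
       M (rshift 1 i) (lshift n 0) * M (lshift n 0) (rshift 1 j) / M (lshift n 0) (lshift n 0))).
Proof.
set c := M (lshift n 0) (lshift n 0) => Hc.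
have HM : M = block_mx 1 0 (c^-1 *: dlsubmx M) 1 *m
   block_mx (ulsubmx M) (ursubmx M) 0 (drsubmx M - c^-1 *: (dlsubmx M *m ursubmx M)).
  rewrite mulmx_block ?mul1mx ?mul0mx ?mulmx0 ?addr0 ?add0r.
  rewrite -{1}(submxK M); congr block_mx.
    rewrite -scalemxAl [ulsubmx M]mx11_scalar mul_mx_scalar scalerA.
    by rewrite [ulsubmx M 0 0]mxE [usubmx M _ _]mxE -/c mulVf // scale1r.
  by rewrite -scalemxAl addrC subrK.
rewrite {1}HM det_mulmx det_lblock !det1 mul1r det_ublock det_mx11 mxE -/c.
rewrite mul1r mxE -/c; congr (_ * \det _); apply/matrixP => i j.
rewrite !mxE big_ord1 !mxE.
by rewrite [c^-1 * _]mulrC.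
Qed.

Lemma Delta_recl (f : nat -> F) n :
  Delta f 0 n.+1 = (\prod_(0 <= j < n) (f 0%N - f j.+1)) * Delta (fun i => f i.+1) 0 n.
Proof.
rewrite /Delta big_nat_recl //; congr (_ * _).
  by rewrite big_add1.
by apply: eq_big_nat => i _; rewrite big_add1.
Qed.

Lemma prod2_recl (g : nat -> nat -> F) n :
  \prod_(0 <= i < n.+1) \prod_(0 <= j < n.+1) g i j =
  g 0%N 0%N * (\prod_(0 <= j < n) g 0%N j.+1) * (\prod_(0 <= i < n) g i.+1 0%N) *
  \prod_(0 <= i < n) \prod_(0 <= j < n) g i.+1 j.+1.
Proof.
rewrite big_nat_recl // [\prod_(0 <= j < n.+1) g 0%N j]big_nat_recl //.
rewrite [X in _ * X = _](eq_bigr (fun i => g i.+1 0%N * \prod_(0 <= j < n) g i.+1 j.+1)); last first.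
  by move=> i _; rewrite big_nat_recl.
by rewrite big_split /= !mulrA.
Qed.

Lemma cauchy n (x y : nat -> F) : (forall i j, x i + y j != 0) ->
  \det (\matrix_(i < n, j < n) (x i + y j)^-1) =
  Delta x 0 n * Delta y 0 n / \prod_(0 <= i < n) \prod_(0 <= j < n) (x i + y j).
Proof.
elim: n x y => [|n IH] x y Hxy.
  by rewrite det_mx00 /Delta !big_geq // !mul1r invr1.
rewrite (schur (M := \matrix_(i < 1 + n, j < 1 + n) (x i + y j)^-1)); last first.
  by rewrite mxE invr_eq0.
rewrite !mxE /=.
set x' := fun i => x i.+1.
set y' := fun j => y j.+1.
have -> : \matrix_(i < n, j < n)
    ((\matrix_(i < 1 + n, j < 1 + n) (x i + y j)^-1) (rshift 1 i) (rshift 1 j) -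
     (\matrix_(i < 1 + n, j < 1 + n) (x i + y j)^-1) (rshift 1 i) (lshift n 0) *
     (\matrix_(i < 1 + n, j < 1 + n) (x i + y j)^-1) (lshift n 0) (rshift 1 j) /
     (x 0%N + y 0%N)^-1) =
  diag_mx (\row_(i < n) ((x' i - x 0%N) / (x' i + y 0%N))) *m
  \matrix_(i < n, j < n) (x' i + y' j)^-1 *m
  diag_mx (\row_(j < n) ((y' j - y 0%N) / (x 0%N + y' j))).
  rewrite mul_diag_mx mul_mx_diag; apply/matrixP => i j; rewrite !mxE /=.
  rewrite /x' /y'.
  have H1 := Hxy i.+1 j.+1; have H2 := Hxy i.+1 0%N; have H3 := Hxy 0%N j.+1; have H4 := Hxy 0%N 0%N.
  field; by rewrite !add1n H1 H2 H3 H4 oner_neq0.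
rewrite !det_mulmx !det_diag IH; last by move=> i j; apply: Hxy.
rewrite (Delta_recl x) (Delta_recl y) (prod2_recl (fun i j => x i + y j)) /=.
rewrite (eq_bigr (fun i : 'I_n => (x' i - x 0%N) / (x' i + y 0%N))); last by move=> i _; rewrite mxE.
rewrite [X in _ * (_ * X) = _](eq_bigr (fun i : 'I_n => (y' i - y 0%N) / (x 0%N + y' i))); last first.
  by move=> i _; rewrite mxE.
rewrite -(big_mkord xpredT (fun i => (x' i - x 0%N) / (x' i + y 0%N))).
rewrite -(big_mkord xpredT (fun i => (y' i - y 0%N) / (x 0%N + y' i))).
set A1 := \prod_(0 <= j < n) (x 0%N - x j.+1).
set B1 := \prod_(0 <= j < n) (y 0%N - y j.+1).
set Q1 := \prod_(0 <= j < n) (x 0%N + y j.+1).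
set Q2 := \prod_(0 <= j < n) (x j.+1 + y 0%N).
set P' := \prod_(0 <= i < n) \prod_(0 <= j < n) (x i.+1 + y j.+1).
have Hab : (\prod_(0 <= i < n) ((x' i - x 0%N) / (x' i + y 0%N))) *
           (\prod_(0 <= i < n) ((y' i - y 0%N) / (x 0%N + y' i))) = (A1 * B1) / (Q2 * Q1).
  rewrite -big_split /A1 /B1 /Q1 /Q2 -!big_split -prodf_div /=.
  apply: eq_bigr => i _; rewrite /x' /y'.
  have H2 := Hxy i.+1 0%N; have H3 := Hxy 0%N i.+1.
  field; by rewrite H2 H3.
have HQ1 : Q1 != 0 by rewrite prodf_seq_neq0; apply/allP => j _; apply: Hxy.
have HQ2 : Q2 != 0 by rewrite prodf_seq_neq0; apply/allP => j _; apply: Hxy.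
have HP' : P' != 0.
  rewrite prodf_seq_neq0; apply/allP => i _ /=.
  by rewrite prodf_seq_neq0; apply/allP => j _; apply: Hxy.
have H0 := Hxy 0%N 0%N.
set PA := \prod_(0 <= i < n) ((x' i - x 0%N) / (x' i + y 0%N)).
set PB := \prod_(0 <= i < n) ((y' i - y 0%N) / (x 0%N + y' i)).
rewrite -/x' -/y'.
have -> : PA * (Delta x' 0 n * Delta y' 0 n / P') * PB = (PA * PB) * (Delta x' 0 n * Delta y' 0 n / P').
  by rewrite mulrAC.
rewrite Hab; field; by rewrite H0 HQ1 HQ2 HP'.
Qed.
End Cauchy.

Section Giambelli.
Variable F : fieldType.
Variable R : F.
Hypothesis HR : forall a b : nat, R + a%:R - b%:R != 0.
Hypothesis HF : forall m : nat, (m.+1)%:R != 0 :> F.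

Definition alphaR (s : nat) : F := (\prod_(k < s.+1) (R + k%:R))^-1.
Definition betaR (t : nat) : F := (\prod_(k < t) (R - t%:R + k%:R))^-1.

Lemma gr_split s t : gamma_ratio R s t = alphaR s * betaR t.
Proof.
rewrite /gamma_ratio /alphaR /betaR.
have -> : (s + t + 1 = t + s.+1)%N by lia.
rewrite big_split_ord /= invfM mulrC; congr (_^-1 * _^-1).
by apply: eq_bigr => k _; rewrite natrD; ring.
Qed.

Lemma det_gr_closed (mu : seq nat) : sorted geq mu ->
  \det (\matrix_(i < part_rank mu, j < part_rank mu)
          (gamma_ratio R (frob_s mu i) (frob_t mu j) /
           ((frob_s mu i)`!%:R * (frob_t mu j)`!%:R
            * (1 + frob_s mu i + frob_t mu j)%:R))) = Kform R mu.
Proof.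
move=> Hs.
set d := part_rank mu.
set s := frob_s mu; set t := frob_t mu.
have -> : \matrix_(i < d, j < d) (gamma_ratio R (s i) (t j) /
           ((s i)`!%:R * (t j)`!%:R * (1 + s i + t j)%:R)) =
  diag_mx (\row_(i < d) (alphaR (s i) / (s i)`!%:R)) *m
  \matrix_(i < d, j < d) ((s i + 1)%:R + (t j)%:R)^-1 *m
  diag_mx (\row_(j < d) (betaR (t j) / (t j)`!%:R)).
  rewrite mul_diag_mx mul_mx_diag; apply/matrixP => i j; rewrite !mxE gr_split.
  have H1 := fact_neq0 HF (s i); have H2 := fact_neq0 HF (t j).
  have H3 : (1 + s i + t j)%:R != 0 :> F by rewrite -addnA add1n HF.
  have E3 : ((s i + 1)%:R + (t j)%:R : F) = (1 + s i + t j)%:R.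
    by rewrite -natrD [(s i + 1)%N]addnC.
  rewrite E3; field; apply/and3P; split => //.
  by move: H3; rewrite !natrD.
rewrite !det_mulmx !det_diag (@cauchy F d (fun i => (s i + 1)%:R) (fun j => (t j)%:R)); last by move=> i j; rewrite -natrD addn1 addSn HF.
rewrite (eq_bigr (fun i : 'I_d => alphaR (s i) / (s i)`!%:R)); last by move=> i _; rewrite mxE.
rewrite [X in _ * X = _](eq_bigr (fun i : 'I_d => betaR (t i) / (t i)`!%:R)); last first.
  by move=> i _; rewrite mxE.
rewrite -(big_mkord xpredT (fun i => alphaR (s i) / (s i)`!%:R)).
rewrite -(big_mkord xpredT (fun i => betaR (t i) / (t i)`!%:R)).
rewrite /Kform -/d -/s -/t.
have -> : Delta (fun i => (s i + 1)%:R : F) 0 d = Delta (fun i => (s i)%:R) 0 d.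
  rewrite /Delta; apply: eq_big_nat => i _; apply: eq_big_nat => j _.
  by rewrite !natrD; ring.
have -> : \prod_(0 <= i < d) \prod_(0 <= j < d) ((s i + 1)%:R + (t j)%:R : F) =
          \prod_(0 <= i < d) \prod_(0 <= j < d) (s i + t j + 1)%:R.
  apply: eq_big_nat => i _; apply: eq_big_nat => j _.
  by rewrite -natrD addnAC.
rewrite (eq_big_nat _ _ (F1 := fun j => gamma_ratio R (s j) (t j)) (F2 := fun j => alphaR (s j) * betaR (t j))); last first.
  by move=> j _; rewrite gr_split.
rewrite [\prod_(0 <= i < d) (alphaR (s i) * betaR (t i))]big_split.
rewrite [\prod_(0 <= j < d) ((s j)`!%:R * (t j)`!%:R)]big_split.
rewrite [\prod_(0 <= i < d) (alphaR (s i) / _)]big_split.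
rewrite [\prod_(0 <= i < d) (betaR (t i) / _)]big_split /=.
rewrite !prodfV.
set PA := \prod_(0 <= i < d) alphaR (s i).
set PB := \prod_(0 <= i < d) betaR (t i).
set PS := \prod_(0 <= i < d) ((s i)`!)%:R.
set PT := \prod_(0 <= i < d) ((t i)`!)%:R.
set Z := \prod_(0 <= i < d) \prod_(0 <= j < d) _.
have HPS : PS != 0.
  by rewrite /PS prodf_seq_neq0; apply/allP => i _; apply: fact_neq0.
have HPT : PT != 0.
  by rewrite /PT prodf_seq_neq0; apply/allP => i _; apply: fact_neq0.
have HZ : Z != 0.
  rewrite /Z prodf_seq_neq0; apply/allP => i _ /=.
  by rewrite prodf_seq_neq0; apply/allP => j _ /=; rewrite addn1 HF.
rewrite -/PS -/PT.
have HA : \prod_(0 <= i < d) \prod_(k < (s i).+1) (R + k%:R) != 0.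
  rewrite prodf_seq_neq0; apply/allP => i _ /=.
  rewrite prodf_seq_neq0; apply/allP => k _ /=.
  by have := HR k 0; rewrite subr0.
have HB : \prod_(0 <= i < d) \prod_(k < t i) (R - (t i)%:R + k%:R) != 0.
  rewrite prodf_seq_neq0; apply/allP => i _ /=.
  by rewrite prodf_seq_neq0; apply/allP => k _ /=; rewrite addrAC HR.
field; by rewrite HA HB HPS HPT HZ.
Qed.

End Giambelli.

Lemma hook_sorted s t : sorted geq (hook s t).
Proof.
rewrite /hook /=.
have : (1 <= s.+1)%N by [].
elim: t s.+1 => [|t IH] x Hx //=.
by rewrite Hx /=; apply: (IH 1%N).
Qed.

Lemma hook_rank s t : part_rank (hook s t) = 1%N.
Proof.
rewrite /part_rank /hook /= size_nseq /=.
rewrite (@eq_in_count _ _ pred0); first by rewrite count_pred0.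
move=> i; rewrite mem_iota => /andP [H1 H2] /=.
case: i H1 H2 => [|[|i]] // H1 H2.
rewrite /= nth_nseq; case: ifP => _ //.
Qed.

Lemma hook_s s t : frob_s (hook s t) 0 = s.
Proof. by rewrite /frob_s /= subn1. Qed.

Lemma hook_t s t : frob_t (hook s t) 0 = t.
Proof.
rewrite /frob_t /conj_part /hook /= count_nseq /=.
by rewrite mul1n add1n subn1.
Qed.

Section HookClosed.
Variable F : fieldType.
Variable R : F.
Hypothesis HR : forall a b : nat, R + a%:R - b%:R != 0.
Hypothesis HF : forall m : nat, (m.+1)%:R != 0 :> F.

Lemma hook_closed s t :
  stilde R (hook s t) = gamma_ratio R s t / (s`!%:R * t`!%:R * (1 + s + t)%:R).
Proof.
rewrite (stilde_closed HR HF (hook_sorted s t)) /Kform hook_rank.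
rewrite /Delta !big_nat1 !big_geq // hook_s hook_t !mul1r mulr1.
by rewrite addnC addnA.
Qed.
End HookClosed.

Lemma RX_nz (a b : nat) : RX + a%:R - b%:R != 0.
Proof.
have -> : RX + a%:R - b%:R = tofrac ('X + (a%:R - b%:R)%:P : {poly rat}).
  by rewrite polyCB !polyC_natr rmorphD rmorphB /= !rmorph_nat addrA.
rewrite tofrac_eq0 -size_poly_eq0 size_XaddC //.
Qed.

Lemma RX_char (m : nat) : (m.+1)%:R != 0 :> ratfun.
Proof.
have -> : (m.+1)%:R = tofrac ((m.+1)%:R : {poly rat}) by rewrite rmorph_nat.
by rewrite tofrac_eq0 -polyC_natr polyC_eq0 pnatr_eq0.
Qed.

Unset Implicit Arguments.
Set Strict Implicit.

Theorem mainTheorem9 (lam : seq nat) :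
  is_partition lam -> lam != [::] ->
  stilde RX lam =
    \det (\matrix_(i < part_rank lam, j < part_rank lam)
            stilde RX (hook (frob_s lam i) (frob_t lam j)))
  /\
  \det (\matrix_(i < part_rank lam, j < part_rank lam)
          stilde RX (hook (frob_s lam i) (frob_t lam j)))
  = \det (\matrix_(i < part_rank lam, j < part_rank lam)
            (gamma_ratio RX (frob_s lam i) (frob_t lam j) /
             ((frob_s lam i)`!%:R * (frob_t lam j)`!%:R
              * (1 + frob_s lam i + frob_t lam j)%:R))).
Proof.
move=> /andP [Hs _] _.
have -> : \matrix_(i < part_rank lam, j < part_rank lam)
            stilde RX (hook (frob_s lam i) (frob_t lam j)) =
          \matrix_(i < part_rank lam, j < part_rank lam)
            (gamma_ratio RX (frob_s lam i) (frob_t lam j) /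
             ((frob_s lam i)`!%:R * (frob_t lam j)`!%:R
              * (1 + frob_s lam i + frob_t lam j)%:R)).
  by apply/matrixP => i j; rewrite !mxE (hook_closed RX_nz RX_char).
split => //.
by rewrite (det_gr_closed RX_nz RX_char Hs) (stilde_closed RX_nz RX_char Hs).
Qed.
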